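(* (a) There exist a connected graph $G$, a constant capacity function $L$ and an integer $k$ such that LP1 for $(G,L,k)$ is feasible but $G^4$ admits no hard-capacitated $k$-center solution (so the integrality gap of LP1 for connected graphs with uniform hard capacities is at least $5$). (b) There exist a connected graph $G$, a constant capacity function $L$ and $k$ such that soft LP1 for $(G,L,k)$ is feasible but $G^3$ admits no soft-capacitated $k$-center solution (gap at least $4$ for uniform soft capacities). (c) There exist a connected graph $G$, a capacity function $L$ all of whose nonzero values are equal, and $k$ such that LP1 for $(G,L,k)$ is feasible but $G^6$ admits no hard-capacitated $k$-center solution (gap at least $7$ for non-uniform hard capacities).
   Context: $G=(V,E)$ undirected unweighted, $\mathrm{dist}_G$ shortest-path distance, $L:V\to\mathbb{N}$, $k$ a positive integer. LP1: variables $x_{u,v},y_u$ with (1) $\sum_u y_u=k$; (2) $x_{u,v}\le y_u$; (3) $\sum_v x_{u,v}\le L(u)y_u$; (4) $\sum_u x_{u,v}=1$; (5) $0\le y_u\le1$; (6) $x_{u,v}=0$ if $\mathrm{dist}_G(u,v)>1$; (7) $x_{u,v}\ge0$. Soft LP1 is LP1 with the upper bound $y_u\le 1$ removed. $G^\delta$ is the graph on $V$ with $uv$ an edge iff $\mathrm{dist}_G(u,v)\le\delta$. A hard-capacitated $k$-center solution in a graph $H$ on $V$: a set $S\subseteq V$, $|S|\le k$, and $\phi:V\to S$ with $\phi(v)=v$ or $\phi(v)v\in E(H)$, and $|\phi^{-1}(u)|\le L(u)$. A soft-capacitated $k$-center solution in $H$: $m:V\to\mathbb{Z}_{\ge0}$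 with $\sum m(u)\le k$ and $\phi:V\to V$ with $m(\phi(v))\ge1$, $\phi(v)=v$ or $\phi(v)v\in E(H)$, and $|\phi^{-1}(u)|\le L(u)m(u)$. *)

(* Defs.v *)
From HB Require Import structures.
From mathcomp Require Import all_boot all_order all_algebra.
Set Implicit Arguments. Unset Strict Implicit. Unset Printing Implicit Defensive.
Import Order.TTheory GRing.Theory Num.Theory.

Definition simple_graph (T : finType) (e : rel T) : Prop :=
  symmetric e /\ irreflexive e.

Definition connected_graph (T : finType) (e : rel T) : Prop :=
  forall u v : T, connect e u v.

Definition dist_le (T : finType) (e : rel T) (d : nat) (u v : T) : Prop :=
  exists p : seq T, [/\ path e u p, last u p = v & (size p <= d)%N].

Definition graph_pow (T : finType) (e : rel T) (delta : nat) (u v : T) : Prop :=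
  u <> v /\ dist_le e delta u v.

Definition hard_kcenter_sol (T : finType) (H : T -> T -> Prop) (L : T -> nat)
    (k : nat) : Prop :=
  exists (S : {set T}) (phi : T -> T),
    [/\ (#|S| <= k)%N,
        (forall v, phi v \in S),
        (forall v, phi v = v \/ H (phi v) v) &
        (forall u, (#|[set v | phi v == u]| <= L u)%N)].

Definition soft_kcenter_sol (T : finType) (H : T -> T -> Prop) (L : T -> nat)
    (k : nat) : Prop :=
  exists (m : T -> nat) (phi : T -> T),
    [/\ (\sum_(u : T) m u <= k)%N,
        (forall v, (1 <= m (phi v))%N),
        (forall v, phi v = v \/ H (phi v) v) &
        (forall u, (#|[set v | phi v == u]| <= L u * m u)%N)].

Local Open Scope ring_scope.

Definition LP1_common (R : realFieldType) (T : finType) (e : rel T)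
    (L : T -> nat) (k : nat) (x : T -> T -> R) (y : T -> R) : Prop :=
  [/\ \sum_(u : T) y u = k%:R,
      (forall u v, x u v <= y u),
      (forall u, \sum_(v : T) x u v <= (L u)%:R * y u),
      (forall v, \sum_(u : T) x u v = 1) &
      ((forall u v, ~ dist_le e 1 u v -> x u v = 0) /\
       (forall u v, 0 <= x u v))].

Definition LP1_feasible (R : realFieldType) (T : finType) (e : rel T)
    (L : T -> nat) (k : nat) : Prop :=
  exists (x : T -> T -> R) (y : T -> R),
    LP1_common e L k x y /\ (forall u, 0 <= y u <= 1).

Definition softLP1_feasible (R : realFieldType) (T : finType) (e : rel T)
    (L : T -> nat) (k : nat) : Prop :=
  exists (x : T -> T -> R) (y : T -> R),
    LP1_common e L k x y /\ (forall u, 0 <= y u).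

(* Main.v *)
Require Import Defs.
From HB Require Import structures.
From mathcomp Require Import all_boot all_order all_algebra.
From mathcomp Require Import zify.
Set Implicit Arguments. Unset Strict Implicit. Unset Printing Implicit Defensive.

Lemma pot_path (T : finType) (e : rel T) (F : T -> nat) :
  (forall u v, e u v -> F v <= (F u).+1) ->
  forall u p, path e u p -> F (last u p) <= F u + size p.
Proof.
move=> He u p; elim: p u => [|w p IH] u /=; first by rewrite addn0.
case/andP=> euw pw; have := IH w pw; have := He _ _ euw.
move=> h1 h2; rewrite addnS; apply: leq_trans h2 _; rewrite -addSn leq_add2r //.
Qed.

Lemma dist_pot (T : finType) (e : rel T) (F : T -> nat) d u v :
  (forall u v, e u v -> F v <= (F u).+1) -> dist_le e d u v -> F v <= F u + d.
Proof.
move=> He [p [pp <- sp]]; apply: leq_trans (pot_path He pp) _.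
by rewrite leq_add2l.
Qed.

Lemma conn_pot (T : finType) (e : rel T) (r : T) (G : T -> nat) :
  symmetric e -> (forall a, a != r -> exists b, e a b && (G b < G a)) ->
  forall u v, connect e u v.
Proof.
move=> sym dec.
have toR : forall a, connect e a r.
  move=> a; have [N] := ubnP (G a); elim: N a => // N IH a lt.
  case: (eqVneq a r) => [->|ne]; first exact: connect0.
  have [b /andP [eab lt']] := dec a ne.
  apply: connect_trans (connect1 eab) (IH b _).
  by apply: leq_trans lt' _; rewrite -ltnS.
move=> u v; apply: connect_trans (toR u) _.
by rewrite (sym_connect_sym sym) toR.
Qed.

Lemma dist1 (T : finType) (e : rel T) u v : (u == v) || e u v -> dist_le e 1 u v.
Proof.
case/orP=> [/eqP ->|euv]; first by exists [::].
by exists [:: v]; rewrite /= euv.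
Qed.

Lemma sum_ord_iota n (f : nat -> nat) :
  \sum_(u < n) f u = sumn (map f (iota 0 n)).
Proof. by rewrite sumnE big_map -(big_mkord xpredT) /index_iota subn0. Qed.

Lemma all_iota_ord n (P : nat -> bool) : all P (iota 0 n) -> forall u : 'I_n, P u.
Proof. by move/allP=> H u; apply: H; rewrite mem_iota /= add0n ltn_ord. Qed.

Definition lp_checks (n : nat) (adj : nat -> nat -> bool) (Ln : nat -> nat)
  (X : nat -> nat -> nat) (Y : nat -> nat) (D k : nat) : bool :=
  [&& sumn (map Y (iota 0 n)) == k * D,
      all (fun a => all (fun b => X a b <= Y a) (iota 0 n)) (iota 0 n),
      all (fun a => sumn (map (X a) (iota 0 n)) <= Ln a * Y a) (iota 0 n),
      all (fun b => sumn (map (fun a => X a b) (iota 0 n)) == D) (iota 0 n),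
      all (fun a => all (fun b => (X a b != 0) ==> (a == b) || adj a b) (iota 0 n)) (iota 0 n)
    & all (fun a => Y a <= D) (iota 0 n)].

Section LP.
Import Order.TTheory GRing.Theory Num.Theory.
Local Open Scope ring_scope.

Lemma lp_common_from_checks (R : realFieldType) n adj Ln X Y (D k : nat) :
  (0 < D)%N -> lp_checks n adj Ln X Y D k ->
  LP1_common (fun u v : 'I_n => adj u v) (fun u => Ln u) k
     (fun u v => (X u v)%:R / D%:R : R) (fun u => (Y u)%:R / D%:R) /\
  (forall u : 'I_n, 0 <= ((Y u)%:R / D%:R : R) <= 1).
Proof.
move=> D0 /and5P [c1 c2 c3 c4 /andP [c6 c5]].
have D0R : (D%:R : R) != 0 by rewrite pnatr_eq0 -lt0n.
have Dp : (0 : R) < D%:R by rewrite ltr0n.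
have Dip : (0 : R) <= D%:R^-1 by rewrite invr_ge0 ltW.
split; last first.
  move=> u; rewrite divr_ge0 ?ler0n //= ler_pdivrMr // mul1r ler_nat.
  exact: (all_iota_ord c5).
split.
- rewrite -mulr_suml -natr_sum sum_ord_iota (eqP c1) natrM mulfK //.
- move=> u v; rewrite ler_wpM2r // ler_nat.
  exact: (all_iota_ord (all_iota_ord c2 u) v).
- move=> u; rewrite -mulr_suml -natr_sum sum_ord_iota mulrA -natrM ler_wpM2r // ler_nat.
  exact: (all_iota_ord c3).
- move=> v; rewrite -mulr_suml -natr_sum (sum_ord_iota n (fun a => X a v)).
  by rewrite (eqP (all_iota_ord c4 v)) divff.
- split=> u v; last by rewrite divr_ge0 ?ler0n.
  move=> nd; have := all_iota_ord (all_iota_ord c6 u) v.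
  case: eqP => [->|_]; first by rewrite mul0r.
  move=> /= h; exfalso; apply: nd; apply: dist1.
  by move: h; rewrite (inj_eq val_inj).
Qed.

Lemma lp_from_checks (R : realFieldType) n adj Ln X Y (D k : nat) :
  (0 < D)%N -> lp_checks n adj Ln X Y D k ->
  LP1_feasible R (fun u v : 'I_n => adj u v) (fun u => Ln u) k.
Proof.
move=> D0 ch; have [h1 h2] := lp_common_from_checks R D0 ch.
by exists (fun u v : 'I_n => (X u v)%:R / D%:R : R), (fun u : 'I_n => (Y u)%:R / D%:R).
Qed.

Lemma softlp_from_checks (R : realFieldType) n adj Ln X Y (D k : nat) :
  (0 < D)%N -> lp_checks n adj Ln X Y D k ->
  softLP1_feasible R (fun u v : 'I_n => adj u v) (fun u => Ln u) k.
Proof.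
move=> D0 ch; have [h1 h2] := lp_common_from_checks R D0 ch.
exists (fun u v : 'I_n => (X u v)%:R / D%:R : R), (fun u : 'I_n => (Y u)%:R / D%:R).
by split=> // u; case/andP: (h2 u).
Qed.

End LP.

Section Count.
Variables (T : finType) (m : nat) (lab : T -> 'I_m.+1).

Lemma card_lab (A : {set T}) :
  #|A| = \sum_(j : 'I_m.+1) #|[set v in A | lab v == j]|.
Proof.
rewrite -sum1_card (partition_big lab xpredT) //=.
by apply: eq_bigr => j _; rewrite -sum1_card; apply: eq_bigl => v; rewrite !inE.
Qed.

Lemma card_fib (A : {set T}) (phi : T -> T) :
  #|A| = \sum_(u : T) #|[set v in A | phi v == u]|.
Proof.
rewrite -sum1_card (partition_big phi xpredT) //=.
by apply: eq_bigr => j _; rewrite -sum1_card; apply: eq_bigl => v; rewrite !inE.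
Qed.

Definition wd (i : 'I_m) : 'I_m.+1 := widen_ord (leqnSn m) i.

Variables (c : T) (K : 'I_m -> {set T}) (cap Kc : nat).
Hypotheses (labc : forall u, (lab u == ord_max) = (u == c))
  (Klab : forall i v, v \in K i -> lab v = wd i) (Kcard : forall i, #|K i| = Kc).

Lemma hard_bound (S : {set T}) (phi : T -> T) :
  (forall v, phi v \in S) -> (forall u, #|[set v | phi v == u]| <= cap) ->
  (forall i v, v \in K i -> lab (phi v) = wd i \/ phi v = c) ->
  exists (a t : 'I_m -> nat), [/\ forall i, Kc <= cap * a i + t i,
     \sum_i t i <= cap * (c \in S) & \sum_i a i + (c \in S) <= #|S| ].
Proof.
move=> phiS capb hK.
pose A i := [set u in S | lab u == wd i].
pose P u := [set v | phi v == u].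
exists (fun i => #|A i|), (fun i => #|[set v in K i | phi v == c]|); split.
- move=> i; rewrite -(Kcard i) (card_fib (K i) phi).
  pose g u := (if u \in A i then cap else 0) + (if u == c then #|[set v in K i | phi v == c]| else 0).
  apply: (@leq_trans (\sum_u g u)).
    apply: leq_sum => u _; rewrite /g.
    case: ifP => uA.
      apply: leq_trans (leq_addr _ _); apply: leq_trans (capb u).
      by apply: subset_leq_card; apply/subsetP=> v; rewrite !inE => /andP [].
    case: eqP => [->|uc]; first by rewrite add0n.
    rewrite addn0 leqn0 cards_eq0; apply/eqP/setP=> v; rewrite !inE.
    apply/negbTE/negP=> /andP [vK /eqP pv].
    case: (hK i v vK) => [h|h]; last by apply: uc; rewrite -pv.
    by move: uA; rewrite !inE -pv phiS h eqxx.
  rewrite big_split /= -big_mkcond /= sum_nat_const mulnC leq_add2l.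
  by rewrite -big_mkcond /= big_pred1_eq.
- case cS: (c \in S); last first.
    rewrite muln0 leqn0; apply/eqP/big1 => i _; apply/eqP; rewrite cards_eq0.
    apply/eqP/setP=> v; rewrite !inE; apply/negbTE/negP=> /andP [_ /eqP pv].
    by move: (phiS v); rewrite pv cS.
  rewrite muln1; apply: leq_trans (capb c).
  rewrite (card_lab [set v | phi v == c]) big_ord_recr /=.
  apply: leq_trans (leq_addr _ _); apply: leq_sum => i _.
  apply: subset_leq_card; apply/subsetP=> v; rewrite !inE => /andP [vK ->].
  by rewrite (Klab vK) eqxx.
- rewrite (card_lab S) big_ord_recr /= leq_add2l.
  case cS: (c \in S) => //=.
  by apply/card_gt0P; exists c; rewrite !inE cS labc eqxx.
Qed.

Lemma soft_bound (mu : T -> nat) (phi : T -> T) :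
  (forall u, #|[set v | phi v == u]| <= cap * mu u) ->
  (forall i v, v \in K i -> lab (phi v) = wd i) ->
  (forall i, Kc <= cap * \sum_(u | lab u == wd i) mu u) /\
  \sum_i \sum_(u | lab u == wd i) mu u <= \sum_u mu u.
Proof.
move=> capb hK; split.
- move=> i; rewrite -(Kcard i) (card_fib (K i) phi) big_distrr /=.
  rewrite (bigID (fun u => lab u == wd i)) /= -[X in _ <= X]addn0 leq_add //.
    apply: leq_sum => u _; apply: leq_trans (capb u).
    by apply: subset_leq_card; apply/subsetP=> v; rewrite !inE => /andP [].
  rewrite leqn0; apply/eqP/big1 => u /negbTE ul; apply/eqP; rewrite cards_eq0.
  apply/eqP/setP=> v; rewrite !inE; apply/negbTE/negP=> /andP [vK /eqP pv].
  by move: ul; rewrite -pv (hK i v vK) eqxx.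
- rewrite (partition_big lab xpredT) //= big_ord_recr /=.
  exact: leq_addr.
Qed.
End Count.

Lemma graph_ok n (adj : nat -> nat -> bool) (dep : nat -> nat) :
  (forall a, adj a a = false) ->
  all (fun a => all (fun b => adj a b == adj b a) (iota 0 n.+1)) (iota 0 n.+1) ->
  all (fun a => (a != 0) ==> has (fun b => adj a b && (dep b < dep a)) (iota 0 n.+1)) (iota 0 n.+1) ->
  simple_graph (fun u v : 'I_n.+1 => adj u v) /\ connected_graph (fun u v : 'I_n.+1 => adj u v).
Proof.
move=> irr sym dec.
have symE : symmetric (fun u v : 'I_n.+1 => adj u v).
  by move=> u v; apply/eqP; exact: (all_iota_ord (all_iota_ord sym u) v).
split; first by split=> // u; exact: irr.
apply: (conn_pot (r := ord0) (G := fun u : 'I_n.+1 => dep u)) => // a a0.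
have := all_iota_ord dec a; rewrite (_ : (val a != 0) = true); last first.
  by apply: contraNneq a0 => h; apply/eqP/val_inj.
move=> /hasP [b]; rewrite mem_iota add0n /= => bn h.
by exists (Ordinal bn).
Qed.

Lemma pot_ok n m (adj : nat -> nat -> bool) (F : nat -> nat -> nat) :
  all (fun i => all (fun a => all (fun b => adj a b ==> (F i b <= (F i a).+1)) (iota 0 n)) (iota 0 n)) (iota 0 m) ->
  forall i : 'I_m, forall u v : 'I_n, adj u v -> F i v <= (F i u).+1.
Proof.
move=> h i u v; apply/implyP; exact: (all_iota_ord (all_iota_ord (all_iota_ord h i) u) v).
Qed.

Definition zone (B a : nat) := (a.-1) %/ B.
Definition off (B a : nat) := (a.-1) %% B.
Definition dep (B a : nat) := if a == 0 then 0 else minn (off B a).+1 4.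
Definition F (B i a : nat) := if a == 0 then 4 else if zone B a == i then 4 + dep B a else 4 - dep B a.

Definition nearA (o o' : nat) :=
  [|| (o <= 2) && (o' <= 2) && ((o.+1 == o') || (o'.+1 == o)),
      (o == 2) && (3 <= o'), (o' == 2) && (3 <= o) | (3 <= o) && (3 <= o')].
Definition adjA (a b : nat) :=
  (a != b) && [|| (a == 0) && (b != 0) && (off 26 b == 0),
                 (b == 0) && (a != 0) && (off 26 a == 0) |
                 (a != 0) && (b != 0) && (zone 26 a == zone 26 b) && nearA (off 26 a) (off 26 b)].

Definition XA (a b : nat) : nat :=
  if a == 0 then (if (b == 0) || (off 26 b == 0) then 1587 else 0)
  else if b == 0 then 0 else if zone 26 a != zone 26 b then 0
  else if off 26 a == 2 then
    (if (off 26 b == 1) || (off 26 b == 2) then 1587 else if 3 <= off 26 b then 897 else 0)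
  else if 3 <= off 26 a then (if 3 <= off 26 b then 30 else 0) else 0.
Definition YA (a : nat) : nat :=
  if a == 0 then 1587 else if off 26 a == 2 then 1587 else if 3 <= off 26 a then 46 else 0.
Definition LcA (a : nat) : nat := if (a != 0) && (off 26 a < 2) then 0 else 15.

Lemma adjA_irr a : adjA a a = false. Proof. by rewrite /adjA eqxx. Qed.

Lemma graphA : simple_graph (fun u v : 'I_157 => adjA u v) /\ connected_graph (fun u v : 'I_157 => adjA u v).
Proof. apply: (graph_ok (dep := dep 26)); [exact: adjA_irr | vm_compute; reflexivity | vm_compute; reflexivity]. Qed.

Lemma potA : forall i : 'I_6, forall u v : 'I_157, adjA u v -> F 26 i v <= (F 26 i u).+1.
Proof. apply: pot_ok. vm_compute. reflexivity. Qed.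

Lemma lpA (R : realFieldType) : LP1_feasible R (fun u v : 'I_157 => adjA u v) (fun _ => 15) 11.
Proof. apply: (@lp_from_checks R 157 adjA (fun _ => 15) XA YA 1587 11); first by []. vm_compute. reflexivity. Qed.

Lemma lpC (R : realFieldType) : LP1_feasible R (fun u v : 'I_157 => adjA u v) (fun u => LcA u) 11.
Proof. apply: (@lp_from_checks R 157 adjA LcA XA YA 1587 11); first by []. vm_compute. reflexivity. Qed.

Definition labg (n m B : nat) (u : 'I_n) : 'I_m.+1 := inord (if val u == 0 then m else zone B u).
Definition Kg (n m B : nat) (i : 'I_m) : {set 'I_n} :=
  [set v : 'I_n | (val v != 0) && (zone B v == i) && (dep B v == 4)].

Lemma zone_lt n m B (u : 'I_n) : n = (m * B).+1 -> 0 < B -> val u != 0 -> zone B u < m.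
Proof.
move=> nE B0; case: u => x xl /= x0; rewrite /zone ltn_divLR //; rewrite nE in xl; lia.
Qed.

Lemma labg_max n m B (u : 'I_n.+1) : n = m * B -> 0 < B ->
  (labg m B u == ord_max) = (u == ord0).
Proof.
move=> nE B0; rewrite /labg -val_eqE /=.
case: (eqVneq (val u) 0) => [u0|u0].
  rewrite inordK // eqxx; apply/esym/eqP/val_inj; exact: u0.
have lt : zone B u < m.
  by apply: (@zone_lt n.+1 m B u) => //; rewrite nE.
rewrite inordK; last by apply: ltnW; rewrite ltnS.
rewrite ltn_eqF //; apply/esym/negbTE; apply: contra u0 => /eqP -> //.
Qed.

Lemma labg_K n m B (i : 'I_m) (v : 'I_n) : v \in Kg n B i -> labg m B v = wd i.
Proof.
rewrite inE => /andP [/andP [v0 /eqP z] _]; apply: val_inj.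
by rewrite /labg /= (negbTE v0) z inordK // ltnW // ltnS.
Qed.

Lemma card_Kg n m B (i : 'I_m) :
  #|Kg n B i| = sumn (map (fun a => nat_of_bool ((a != 0) && (zone B a == i) && (dep B a == 4))) (iota 0 n)).
Proof.
rewrite -sum1_card big_mkcond /= -(sum_ord_iota n (fun a => nat_of_bool ((a != 0) && (zone B a == i) && (dep B a == 4)))).
by apply: eq_bigr => v _; rewrite inE; case: (_ && _).
Qed.

Lemma KcardA : forall i : 'I_6, #|Kg 157 26 i| = 23.
Proof.
move=> i; rewrite card_Kg; apply/eqP; move: i.
apply: (all_iota_ord (P := fun i => sumn (map (fun a => nat_of_bool ((a != 0) && (zone 26 a == i) && (dep 26 a == 4))) (iota 0 157)) == 23)).
vm_compute. reflexivity. Qed.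

Lemma F_K n m B (i : 'I_m) (v : 'I_n) : v \in Kg n B i -> F B i v = 8.
Proof. by rewrite inE /F => /andP [/andP [/negbTE -> ->] /eqP ->]. Qed.

Lemma F_other B i (a : nat) : a != 0 -> zone B a != i -> F B i a <= 3.
Proof.
move=> a0 z; rewrite /F (negbTE a0) (negbTE z) /dep (negbTE a0).
have : 1 <= minn (off B a).+1 4 by rewrite leq_min.
lia.
Qed.

Lemma labg_zone n m B (i : 'I_m) (u : 'I_n) : val u != 0 -> zone B u = i -> labg m B u = wd i.
Proof. by move=> u0 z; apply: val_inj; rewrite /labg /= (negbTE u0) z inordK // ltnW // ltnS. Qed.

Lemma arith6 (a t : 'I_6 -> nat) (b : nat) :
  (forall i, 23 <= 15 * a i + t i) -> \sum_(i < 6) t i <= 15 * b -> \sum_(i < 6) a i + b <= 11 -> b <= 1 -> False.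
Proof.
move=> h1 h2 h3 h4.
have : \sum_(i < 6) 16 <= \sum_i (8 * a i + t i).
  by apply: leq_sum => i _; have := h1 i; lia.
rewrite big_split /= -big_distrr /= sum_nat_const card_ord /=.
set A := \sum_(i < 6) a i in h3 *. set T := \sum_(i < 6) t i in h2 *.
lia.
Qed.

Lemma noA : ~ hard_kcenter_sol (graph_pow (fun u v : 'I_157 => adjA u v) 4) (fun _ => 15) 11.
Proof.
case=> S [phi [Sk phiS near capb]].
have labc : forall u : 'I_157, (labg 6 26 u == ord_max) = (u == ord0).
  by move=> u; apply: (@labg_max 156).
have hK : forall i v, v \in Kg 157 26 i -> labg 6 26 (phi v) = wd i \/ phi v = ord0.
  move=> i v vK; case: (near v) => [->|[_ d]]; first by left; exact: labg_K vK.
  have := dist_pot (F := fun u : 'I_157 => F 26 i u) (potA i) d.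
  rewrite (F_K vK); case: (eqVneq (nat_of_ord (phi v)) 0) => [p0|p0].
    by right; apply: val_inj.
  case: (eqVneq (zone 26 (phi v)) i) => [z|z]; first by left; exact: labg_zone.
  by have := F_other p0 z; lia.
have [a [t [h1 h2 h3]]] := hard_bound labc (@labg_K 157 6 26) KcardA phiS capb hK.
apply: (arith6 h1 h2) (leq_trans h3 (leq_trans _ Sk)) _ => //.
by case: (_ \in _).
Qed.

Lemma F_other2 B i (a : nat) : a != 0 -> zone B a != i -> 2 <= F B i a -> off B a < 2.
Proof.
move=> a0 z; rewrite /F (negbTE a0) (negbTE z) /dep (negbTE a0).
rewrite /minn; case: ifP; lia.
Qed.

Lemma noC : ~ hard_kcenter_sol (graph_pow (fun u v : 'I_157 => adjA u v) 6) (fun u => LcA u) 11.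
Proof.
case=> S [phi [Sk phiS near capb]].
have capb' : forall u, #|[set v | phi v == u]| <= 15.
  by move=> u; apply: leq_trans (capb u) _; rewrite /LcA; case: ifP.
have labc : forall u : 'I_157, (labg 6 26 u == ord_max) = (u == ord0).
  by move=> u; apply: (@labg_max 156).
have hK : forall i v, v \in Kg 157 26 i -> labg 6 26 (phi v) = wd i \/ phi v = ord0.
  move=> i v vK; case: (near v) => [->|[_ d]]; first by left; exact: labg_K vK.
  have := dist_pot (F := fun u : 'I_157 => F 26 i u) (potA i) d.
  rewrite (F_K vK); case: (eqVneq (nat_of_ord (phi v)) 0) => [p0|p0].
    by right; apply: val_inj.
  case: (eqVneq (zone 26 (phi v)) i) => [z|z]; first by left; exact: labg_zone.
  move=> h; have o2 : off 26 (phi v) < 2.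
    by apply: (@F_other2 26 i) => //; lia.
  have := capb (phi v); rewrite /LcA p0 o2 /= leqn0 cards_eq0 => /eqP /setP /(_ v).
  by rewrite !inE eqxx.
have [a [t [h1 h2 h3]]] := hard_bound labc (@labg_K 157 6 26) KcardA phiS capb' hK.
apply: (arith6 h1 h2) (leq_trans h3 (leq_trans _ Sk)) _ => //.
by case: (_ \in _).
Qed.

Definition nearB (o o' : nat) :=
  [|| (o <= 1) && (o' <= 2) && (o.+1 == o'), (o' <= 1) && (o <= 2) && (o'.+1 == o)
    | (2 <= o) && (2 <= o')].
Definition adjB (a b : nat) :=
  (a != b) && [|| (a == 0) && (b != 0) && (off 13 b == 0),
                 (b == 0) && (a != 0) && (off 13 a == 0) |
                 (a != 0) && (b != 0) && (zone 13 a == zone 13 b) && nearB (off 13 a) (off 13 b)].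
Definition XB (a b : nat) : nat :=
  if a == 0 then (if (b == 0) || (off 13 b == 0) then 330 else 0)
  else if b == 0 then 0 else if zone 13 a != zone 13 b then 0
  else if off 13 a == 2 then
    (if off 13 b == 1 then 330 else if 2 <= off 13 b then 240 else 0)
  else if 3 <= off 13 a then (if 2 <= off 13 b then 9 else 0) else 0.
Definition YB (a : nat) : nat :=
  if a == 0 then 330 else if off 13 a == 2 then 330 else if 3 <= off 13 a then 11 else 0.

Lemma adjB_irr a : adjB a a = false. Proof. by rewrite /adjB eqxx. Qed.

Lemma graphB : simple_graph (fun u v : 'I_40 => adjB u v) /\ connected_graph (fun u v : 'I_40 => adjB u v).
Proof. apply: (graph_ok (dep := dep 13)); [exact: adjB_irr | vm_compute; reflexivity | vm_compute; reflexivity]. Qed.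

Lemma potB : forall i : 'I_3, forall u v : 'I_40, adjB u v -> F 13 i v <= (F 13 i u).+1.
Proof. apply: pot_ok. vm_compute. reflexivity. Qed.

Lemma lpB (R : realFieldType) : softLP1_feasible R (fun u v : 'I_40 => adjB u v) (fun _ => 9) 5.
Proof. apply: (@softlp_from_checks R 40 adjB (fun _ => 9) XB YB 330 5); first by []. vm_compute. reflexivity. Qed.

Lemma KcardB : forall i : 'I_3, #|Kg 40 13 i| = 10.
Proof.
move=> i; rewrite card_Kg; apply/eqP; move: i.
apply: (all_iota_ord (P := fun i => sumn (map (fun a => nat_of_bool ((a != 0) && (zone 13 a == i) && (dep 13 a == 4))) (iota 0 40)) == 10)).
vm_compute. reflexivity.
Qed.

Lemma noB : ~ soft_kcenter_sol (graph_pow (fun u v : 'I_40 => adjB u v) 3) (fun _ => 9) 5.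
Proof.
case=> mu [phi [muk _ near capb]].
have hK : forall i v, v \in Kg 40 13 i -> labg 3 13 (phi v) = wd i.
  move=> i v vK; case: (near v) => [->|[_ d]]; first exact: labg_K vK.
  have := dist_pot (F := fun u : 'I_40 => F 13 i u) (potB i) d.
  rewrite (F_K vK); case: (eqVneq (nat_of_ord (phi v)) 0) => [p0|p0].
    by rewrite /F p0.
  case: (eqVneq (zone 13 (phi v)) i) => [z|z]; first by move=> _; exact: labg_zone.
  by have := F_other p0 z; lia.
have [h1 h2] := soft_bound (lab := labg 3 13) KcardB capb hK.
have : \sum_(i < 3) 2 <= \sum_(i < 3) \sum_(u | labg 3 13 u == wd i) mu u.
  by apply: leq_sum => i _; have := h1 i; lia.
rewrite sum_nat_const card_ord /= => h3.
have := leq_trans h3 (leq_trans h2 muk); lia.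
Qed.

Theorem theorem6 (R : realFieldType) :
  (* (a) uniform hard capacities, gap >= 5 *)
  (exists (n : nat) (e : rel 'I_n) (L : 'I_n -> nat) (k : nat),
     [/\ simple_graph e /\ connected_graph e,
         (exists c, forall u, L u = c), (0 < k)%N,
         LP1_feasible R e L k &
         ~ hard_kcenter_sol (graph_pow e 4) L k]) /\
  (* (b) uniform soft capacities, gap >= 4 *)
  (exists (n : nat) (e : rel 'I_n) (L : 'I_n -> nat) (k : nat),
     [/\ simple_graph e /\ connected_graph e,
         (exists c, forall u, L u = c), (0 < k)%N,
         softLP1_feasible R e L k &
         ~ soft_kcenter_sol (graph_pow e 3) L k]) /\
  (* (c) non-uniform hard capacities (all nonzero values equal), gap >= 7 *)
  (exists (n : nat) (e : rel 'I_n) (L : 'I_n -> nat) (k : nat),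
     [/\ simple_graph e /\ connected_graph e,
         (exists c, forall u, L u = 0 \/ L u = c), (0 < k)%N,
         LP1_feasible R e L k &
         ~ hard_kcenter_sol (graph_pow e 6) L k]).

Proof.
split; [|split].
- exists 157, (fun u v : 'I_157 => adjA u v), (fun _ => 15), 11; split => //.
  + exact: graphA.
  + by exists 15.
  + exact: lpA.
  + exact: noA.
- exists 40, (fun u v : 'I_40 => adjB u v), (fun _ => 9), 5; split => //.
  + exact: graphB.
  + by exists 9.
  + exact: lpB.
  + exact: noB.
- exists 157, (fun u v : 'I_157 => adjA u v), (fun u => LcA u), 11; split => //.
  + exact: graphA.
  + by exists 15 => u; rewrite /LcA; case: ifP; [left|right].
  + exact: lpC.
  + exact: noC.
Qed.
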